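(* Let $S$ be an inverse monoid with identity element $1$, and let $(X,E(S),p)$ be a presheaf of geodesic metric spaces on which $S$ acts properly and coboundedly. Then: (1) there exists a finite quasi-generating set $\mathcal{M}\subseteq S$; (2) there exists $x_1\in X_1$ such that the orbit map $(S,d_{\mathcal{M}})\to (X,d)$, $s\mapsto x_1\cdot s$, is an order-preserving quasi-isometry, where $d_{\mathcal M}$ is the Cayley metric associated to $\mathcal M$.
   Context: An inverse semigroup is a semigroup $S$ in which every $s$ has a unique $s^{-1}\in S$ with $ss^{-1}s=s$ and $s^{-1}ss^{-1}=s^{-1}$; an inverse monoid is one with an identity $1$. $E(S)$ is the set of idempotents ($e e=e$); idempotents commute. The natural partial order on $S$ is $s\le t$ iff $s=et$ for some $e\in E(S)$; $E(S)$ is a meet-semilattice with meet $ef$. Write $\mathbf{d}(s)=s^{-1}s$. Green's relation $\mathcal L$: $(s,t)\in\mathcal L$ iff $s^{-1}s=t^{-1}t$. Presheaf: for a meet-semilattice $E$, a presheaf $(X,E,p)$ is a set $X$ with maps $p\colon X\to E$ and $X\times E\to X$, $(x,e)\mapsto x\cdot e$, such that $(x\cdot e)\cdot f=x\cdot ef$, $x\cdot p(x)=x$, and $p(x\cdot e)=p(x)e$. Fibers are $X_e=p^{-1}(e)$. $X$ is partially ordered by $x\le y$ iff $x=y\cdot p(x)$. A presheaf of metric spaces is such a presheaf with $p$ surjective, each fiber $X_e$ a metric space with metric $d_e$, and $d_e(x,y)\ge d_{ef}(x\cdot f,y\cdot f)$ for all $x,y\in X_e$, $f\in E$. Set $d(x,y)=d_e(x,y)$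 if $x,y\in X_e$ and $d(x,y)=\infty$ if $x,y$ lie in different fibers. It is geodesic if whenever $D=d(x,y)<\infty$ there is an isometric embedding $\gamma\colon[0,D]\to X$ with $\gamma(0)=x$, $\gamma(D)=y$. Action: $S$ acts on a presheaf of metric spaces $(X,E(S),p)$ if there is a right action $X\times S\to X$ (so $(x\cdot s)\cdot t=x\cdot(st)$) extending the presheaf map $X\times E(S)\to X$, such that $p(x\cdot s)=s^{-1}p(x)s$, and $d_e(x,y)\ge d_{s^{-1}es}(x\cdot s,y\cdot s)$ for all $x,y\in X_e$, $s\in S$. The action is proper if for every $y_1\in X_1$ and $R\ge0$ there is a finite $\mathcal C\subseteq S$ with $\{s\in S: d(y_1\cdot s,y_1\cdot s^{-1}s)\le R\}\subseteq \mathcal C E(S)=\{ce: c\in\mathcal C, e\in E(S)\}$. It is cobounded if there exist $x_1\in X_1$ and $T\ge0$ with $B(x_1,T)\cdot S=X$, where $B(x_1,T)$ is the ball in $(X,d)$. A quasi-generating set is a symmetric subset $\mathcal M=\mathcal M^{-1}\subseteq S$ such that $S$ is generated as a semigroup by $\mathcal M\cup E(S)$. The Cayley metric $d_{\mathcal M}$ on $S$: $d_{\mathcal M}(s,t)=\infty$ if $(s,t)\notin\mathcal L$; otherwise it is the path distance between $s$ and $t$ in the graph whose vertex set is the $\mathcal L$-class of $s$ and where $u,v$ are joined by an edge whenever $gu=v$ for some $g\in\mathcal M$ (edges of length 1). A map $f$ between extended metric spaces $(A,d_A)$, $(B,d_B)$ is a quasi-isometry if there are constants $L\ge1,C\ge0$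 such that $d_A(a,a')<\infty$ iff $d_B(f(a),f(a'))<\infty$, $\frac1L d_A(a,a')-C\le d_B(f(a),f(a'))\le L d_A(a,a')+C$ whenever these are finite, and every point of $B$ is within distance $C$ of $f(A)$. Order-preserving means $s\le t$ in the natural partial order implies $f(s)\le f(t)$ in the partial order of $X$. *)

(* Defs.v *)
From Stdlib Require Import Reals List ClassicalEpsilon.
From Coquelicot Require Import Rbar Lub.
Open Scope R_scope.

Record InverseMonoid := {
  im_car :> Type;
  im_mul : im_car -> im_car -> im_car;
  im_one : im_car;
  im_inv : im_car -> im_car;
  im_assoc : forall a b c, im_mul a (im_mul b c) = im_mul (im_mul a b) c;
  im_one_l : forall a, im_mul im_one a = a;
  im_one_r : forall a, im_mul a im_one = a;
  im_inv_1 : forall s, im_mul (im_mul s (im_inv s)) s = s;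
  im_inv_2 : forall s, im_mul (im_mul (im_inv s) s) (im_inv s) = im_inv s;
  im_inv_uniq : forall s t, im_mul (im_mul s t) s = s ->
                  im_mul (im_mul t s) t = t -> t = im_inv s
}.

Arguments im_mul {_}.
Arguments im_one {_}.
Arguments im_inv {_}.

Section Defs.
Variable IM : InverseMonoid.

Definition idem (e : IM) : Prop := im_mul e e = e.

Definition npo (s t : IM) : Prop := exists e, idem e /\ s = im_mul e t.

Definition Lrel (s t : IM) : Prop :=
  im_mul (im_inv s) s = im_mul (im_inv t) t.

Definition quasi_generating (M : list IM) : Prop :=
  (forall g, In g M -> In (im_inv g) M) /\
  (forall s : IM, exists (a : IM) (l : list IM),
      (forall g, In g (a :: l) -> In g M \/ idem g) /\
      s = fold_left im_mul l a).

Definition cayley_edge (M : list IM) (u v : IM) : Prop :=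
  exists g, In g M /\ (im_mul g u = v \/ im_mul g v = u).

Inductive cwalk (M : list IM) : nat -> IM -> IM -> Prop :=
| cw0 : forall u, cwalk M 0 u u
| cwS : forall n u v w, cwalk M n u v -> Lrel v w -> cayley_edge M v w ->
          cwalk M (Datatypes.S n) u w.

(** Cayley metric: infimum of walk lengths (+oo if no walk inside the
    L-class, in particular if s, t are not L-related). *)
Definition cayley_dist (M : list IM) (s t : IM) : Rbar :=
  Glb_Rbar (fun r => exists n, cwalk M n s t /\ r = INR n).

Variables (X : Type) (p : X -> IM) (act : X -> IM -> X) (d : X -> X -> R).

Definition ext_d (x y : X) : Rbar :=
  if excluded_middle_informative (p x = p y) then Finite (d x y) else p_infty.

(** (X, E(S), p) is a presheaf of metric spaces; the presheaf map
    X x E(S) -> X is the restriction of act to idempotents. *)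
Definition presheaf_metric : Prop :=
  (forall x, idem (p x)) /\
  (forall e, idem e -> exists x, p x = e) /\
  (forall x e f, idem e -> idem f -> act (act x e) f = act x (im_mul e f)) /\
  (forall x, act x (p x) = x) /\
  (forall x e, idem e -> p (act x e) = im_mul (p x) e) /\
  (forall x y, p x = p y -> 0 <= d x y) /\
  (forall x y, p x = p y -> (d x y = 0 <-> x = y)) /\
  (forall x y, p x = p y -> d x y = d y x) /\
  (forall x y z, p x = p y -> p y = p z -> d x z <= d x y + d y z) /\
  (forall x y f, p x = p y -> idem f -> d (act x f) (act y f) <= d x y).

Definition geodesic : Prop :=
  forall x y D, ext_d x y = Finite D ->
    exists gamma : R -> X, gamma 0 = x /\ gamma D = y /\
      forall a b, 0 <= a <= D -> 0 <= b <= D ->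
        ext_d (gamma a) (gamma b) = Finite (Rabs (a - b)).

Definition acts : Prop :=
  (forall x s t, act (act x s) t = act x (im_mul s t)) /\
  (forall x s, p (act x s) = im_mul (im_mul (im_inv s) (p x)) s) /\
  (forall x y s, p x = p y -> d (act x s) (act y s) <= d x y).

Definition proper_action : Prop :=
  forall y1 R0, p y1 = im_one -> 0 <= R0 ->
    exists C : list IM, forall s : IM,
      Rbar_le (ext_d (act y1 s) (act y1 (im_mul (im_inv s) s))) (Finite R0) ->
      exists c e, In c C /\ idem e /\ s = im_mul c e.

Definition cobounded_action : Prop :=
  exists x1 T, p x1 = im_one /\ 0 <= T /\
    forall x, exists y s, Rbar_le (ext_d x1 y) (Finite T) /\ x = act y s.

Definition xle (x y : X) : Prop := x = act y (p x).

End Defs.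

Definition quasi_isometry {A B : Type} (dA : A -> A -> Rbar) (dB : B -> B -> Rbar)
  (f : A -> B) : Prop :=
  exists L C, 1 <= L /\ 0 <= C /\
    (forall a a', is_finite (dA a a') <-> is_finite (dB (f a) (f a'))) /\
    (forall a a' u v, dA a a' = Finite u -> dB (f a) (f a') = Finite v ->
        u / L - C <= v <= L * u + C) /\
    (forall b, exists a, Rbar_le (dB b (f a)) (Finite C)).

(* Main.v *)
Require Import Defs.
From Stdlib Require Import Reals List ZArith Lra Lia ClassicalEpsilon.
From Coquelicot Require Import Rbar Lub.

Section Alg.
Variable S : InverseMonoid.
Local Notation "a ⊗ b" := (@im_mul S a b) (at level 40, left associativity).
Local Notation inv := (@im_inv S).

Ltac ra := repeat rewrite <- im_assoc.

Lemma rcomb (a b c x : S) : a ⊗ b = c -> a ⊗ (b ⊗ x) = c ⊗ x.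
Proof. intros H. rewrite im_assoc, H. reflexivity. Qed.

Lemma inv_inv (s : S) : inv (inv s) = s.
Proof. symmetry. apply im_inv_uniq; [apply im_inv_2 | apply im_inv_1]. Qed.

Lemma idem_inv (e : S) : idem S e -> inv e = e.
Proof. unfold idem; intros H. symmetry. apply im_inv_uniq; rewrite !H; reflexivity. Qed.

Lemma idem_mul (e f : S) : idem S e -> idem S f -> idem S (e ⊗ f).
Proof.
  unfold idem; intros He Hf.
  assert (Hb : f ⊗ (inv (e ⊗ f) ⊗ e) = inv (e ⊗ f)).
  { apply im_inv_uniq.
    - transitivity ((e ⊗ (f ⊗ f)) ⊗ inv (e ⊗ f) ⊗ ((e ⊗ e) ⊗ f)); [ra; reflexivity|].
      rewrite He, Hf. apply im_inv_1.
    - transitivity (f ⊗ (inv (e ⊗ f) ⊗ ((e ⊗ e) ⊗ (f ⊗ f)) ⊗ inv (e ⊗ f)) ⊗ e); [ra; reflexivity|].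
      rewrite He, Hf. rewrite im_inv_2. ra. reflexivity. }
  assert (Ha' : inv (e ⊗ f) ⊗ inv (e ⊗ f) = inv (e ⊗ f)).
  { rewrite <- Hb at 1 2.
    transitivity (f ⊗ (inv (e ⊗ f) ⊗ (e ⊗ f) ⊗ inv (e ⊗ f)) ⊗ e); [ra; reflexivity|].
    rewrite im_inv_2. rewrite <- im_assoc. exact Hb. }
  assert (H : e ⊗ f = inv (e ⊗ f)).
  { rewrite <- (inv_inv (e ⊗ f)) at 1. apply idem_inv. exact Ha'. }
  rewrite H at 1 2. rewrite Ha'. symmetry; exact H.
Qed.

Lemma idem_comm (e f : S) : idem S e -> idem S f -> e ⊗ f = f ⊗ e.
Proof.
  intros He Hf.
  pose proof (idem_mul e f He Hf) as Hef. pose proof (idem_mul f e Hf He) as Hfe.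
  transitivity (inv (e ⊗ f)); [symmetry; apply idem_inv; exact Hef|].
  unfold idem in *.
  symmetry. apply im_inv_uniq.
  - transitivity ((e ⊗ (f ⊗ f) ⊗ e) ⊗ (e ⊗ f)); [ra; reflexivity|].
    rewrite Hf. transitivity ((e ⊗ f) ⊗ (e ⊗ e) ⊗ f); [ra; reflexivity|]. rewrite He.
    rewrite <- im_assoc. exact Hef.
  - transitivity ((f ⊗ (e ⊗ e) ⊗ f) ⊗ (f ⊗ e)); [ra; reflexivity|].
    rewrite He. transitivity ((f ⊗ e) ⊗ (f ⊗ f) ⊗ e); [ra; reflexivity|]. rewrite Hf.
    rewrite <- im_assoc. exact Hfe.
Qed.

Lemma idem_rinv (s : S) : idem S (s ⊗ inv s).
Proof. unfold idem. rewrite im_assoc, im_inv_1. reflexivity. Qed.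
Lemma idem_linv (s : S) : idem S (inv s ⊗ s).
Proof. unfold idem. rewrite im_assoc, im_inv_2. reflexivity. Qed.

Lemma inv_mul (s t : S) : inv (s ⊗ t) = inv t ⊗ inv s.
Proof.
  symmetry. apply im_inv_uniq.
  - transitivity (s ⊗ ((t ⊗ inv t) ⊗ (inv s ⊗ s)) ⊗ t); [ra; reflexivity|].
    rewrite (idem_comm (t ⊗ inv t) (inv s ⊗ s)) by (apply idem_rinv || apply idem_linv).
    transitivity ((s ⊗ inv s ⊗ s) ⊗ (t ⊗ inv t ⊗ t)); [ra; reflexivity|].
    rewrite !im_inv_1. reflexivity.
  - transitivity (inv t ⊗ ((inv s ⊗ s) ⊗ (t ⊗ inv t)) ⊗ inv s); [ra; reflexivity|].
    rewrite (idem_comm (inv s ⊗ s) (t ⊗ inv t)) by (apply idem_rinv || apply idem_linv).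
    transitivity ((inv t ⊗ t ⊗ inv t) ⊗ (inv s ⊗ s ⊗ inv s)); [ra; reflexivity|].
    rewrite !im_inv_2. reflexivity.
Qed.

Lemma idem_conj (e s : S) : idem S e -> s ⊗ (inv s ⊗ e ⊗ s) = e ⊗ s.
Proof.
  intros He.
  transitivity ((s ⊗ inv s) ⊗ e ⊗ s); [ra; reflexivity|].
  rewrite (idem_comm (s ⊗ inv s) e) by (auto using idem_rinv).
  transitivity (e ⊗ (s ⊗ inv s ⊗ s)); [ra; reflexivity|]. rewrite im_inv_1. reflexivity.
Qed.

Lemma idem_conj_idem (e s : S) : idem S e -> idem S (inv s ⊗ e ⊗ s).
Proof.
  intros He. unfold idem.
  transitivity (inv s ⊗ (e ⊗ (s ⊗ inv s)) ⊗ e ⊗ s); [ra; reflexivity|].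
  rewrite (idem_comm e (s ⊗ inv s)) by (auto using idem_rinv).
  transitivity (inv s ⊗ s ⊗ inv s ⊗ (e ⊗ e) ⊗ s); [ra; reflexivity|].
  rewrite im_inv_2. unfold idem in He. rewrite He. ra. reflexivity.
Qed.


Lemma alg_A1 (u v c f : S) : inv u ⊗ u = inv v ⊗ v -> idem S f ->
  v = c ⊗ f ⊗ u -> v = c ⊗ u.
Proof.
  intros Hl Hf Hv.
  pose proof (idem_conj_idem f u Hf) as Hf'.
  pose proof (idem_conj f u Hf) as Hfu.
  set (f' := inv u ⊗ f ⊗ u) in *.
  assert (Hv2 : v = (c ⊗ u) ⊗ f') by (rewrite Hv, <- im_assoc, <- Hfu; ra; reflexivity).
  set (w := c ⊗ u) in *.
  set (h := inv w ⊗ w).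
  assert (Hh : idem S h) by apply idem_linv.
  assert (E1 : inv v ⊗ v = h ⊗ f').
  { rewrite Hv2, inv_mul, (idem_inv f') by exact Hf'.
    transitivity (f' ⊗ h ⊗ f'); [unfold h; ra; reflexivity|].
    rewrite (idem_comm f' h Hf' Hh). rewrite <- im_assoc. unfold idem in Hf'. rewrite Hf'. reflexivity. }
  assert (E2 : h ⊗ (inv u ⊗ u) = h).
  { unfold h, w. rewrite inv_mul.
    transitivity (inv u ⊗ inv c ⊗ c ⊗ (u ⊗ inv u ⊗ u)); [ra; reflexivity|].
    rewrite im_inv_1. ra. reflexivity. }
  assert (E3 : h = h ⊗ f').
  { rewrite <- E2 at 1. rewrite Hl, E1. rewrite im_assoc. unfold idem in Hh. rewrite Hh. reflexivity. }
  assert (E4 : w = w ⊗ h) by (unfold h; rewrite im_assoc, im_inv_1; reflexivity).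
  rewrite Hv2. rewrite E4 at 2. rewrite E3. rewrite im_assoc. rewrite <- E4. reflexivity.
Qed.

Lemma alg_A2 (u v : S) : inv u ⊗ u = inv v ⊗ v -> v ⊗ inv u ⊗ u = v.
Proof. intros Hl. rewrite <- im_assoc, Hl, im_assoc, im_inv_1. reflexivity. Qed.

Lemma alg_A3 (u v : S) : inv u ⊗ u = inv v ⊗ v -> inv (v ⊗ inv u) ⊗ (v ⊗ inv u) = u ⊗ inv u.
Proof.
  intros Hl. rewrite inv_mul, inv_inv.
  transitivity (u ⊗ (inv v ⊗ v) ⊗ inv u); [ra; reflexivity|].
  rewrite <- Hl. rewrite im_assoc, im_inv_1. reflexivity.
Qed.

Lemma alg_A4 (g u v : S) : inv u ⊗ u = inv v ⊗ v -> g ⊗ u = v -> inv g ⊗ g ⊗ u = u.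
Proof.
  intros Hl Hg. rewrite <- (idem_conj (inv g ⊗ g) u) by apply idem_linv.
  transitivity (u ⊗ (inv u ⊗ inv g ⊗ (g ⊗ u))); [ra; reflexivity|].
  rewrite <- inv_mul, Hg, <- Hl, im_assoc, im_inv_1. reflexivity.
Qed.

Lemma alg_A6 (g v w : S) : inv w ⊗ w = inv v ⊗ v -> g ⊗ w = v -> inv g ⊗ v = w.
Proof. intros Hl Hg. rewrite <- Hg, im_assoc. apply (alg_A4 g w v Hl Hg). Qed.

Lemma alg_A7 (e t : S) : idem S e ->
  e ⊗ t = t ⊗ (inv (e ⊗ t) ⊗ im_one ⊗ (e ⊗ t)).
Proof.
  intros He. rewrite im_one_r, inv_mul, (idem_inv e He). symmetry.
  transitivity (t ⊗ (inv t ⊗ (e ⊗ e) ⊗ t)); [ra; reflexivity|].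
  unfold idem in He. rewrite He. rewrite idem_conj by exact He. reflexivity.
Qed.

Lemma fold_mul (l : list S) (g a : S) : fold_left (@im_mul S) l (g ⊗ a) = g ⊗ fold_left (@im_mul S) l a.
Proof.
  revert a; induction l as [|x l IH]; intros a; simpl; [reflexivity|].
  rewrite <- im_assoc. apply IH.
Qed.

End Alg.

Open Scope R_scope.
Section Geo.
Variable S : InverseMonoid.
Local Notation "a ⊗ b" := (@im_mul S a b) (at level 40, left associativity).
Local Notation inv := (@im_inv S).
Variables (X : Type) (p : X -> S) (act : X -> S -> X) (d : X -> X -> R).

Hypothesis Hact : forall x s t, act (act x s) t = act x (s ⊗ t).
Hypothesis Hpact : forall x s, p (act x s) = inv s ⊗ p x ⊗ s.
Hypothesis Hdnon : forall x y s, p x = p y -> d (act x s) (act y s) <= d x y.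
Hypothesis Hd0 : forall x y, p x = p y -> 0 <= d x y.
Hypothesis Hdxx : forall x y, p x = p y -> (d x y = 0 <-> x = y).
Hypothesis Hsym : forall x y, p x = p y -> d x y = d y x.
Hypothesis Htri : forall x y z, p x = p y -> p y = p z -> d x z <= d x y + d y z.

Lemma ext_d_fin x y r : ext_d S X p d x y = Finite r -> p x = p y /\ d x y = r.
Proof.
  unfold ext_d. destruct (excluded_middle_informative (p x = p y)); intros H; [|discriminate].
  inversion H; auto.
Qed.

Lemma ext_d_eq x y : p x = p y -> ext_d S X p d x y = Finite (d x y).
Proof.
  unfold ext_d. destruct (excluded_middle_informative (p x = p y)); intros H; [reflexivity|contradiction].
Qed.

Lemma ext_d_le x y r : Rbar_le (ext_d S X p d x y) (Finite r) -> p x = p y /\ d x y <= r.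
Proof.
  unfold ext_d. destruct (excluded_middle_informative (p x = p y)); simpl; intros H; [auto|contradiction].
Qed.

Variable x1 : X.
Hypothesis Hx1 : p x1 = im_one.

Lemma p1 s : p (act x1 s) = inv s ⊗ s.
Proof. rewrite Hpact, Hx1, im_one_r. reflexivity. Qed.

Lemma p1_idem s : p (act x1 (inv s ⊗ s)) = inv s ⊗ s.
Proof. rewrite p1, idem_inv by apply idem_linv. apply idem_linv. Qed.

Variable T : R.
Hypothesis HT : 0 <= T.
Hypothesis Hcob : forall x, exists y s, Rbar_le (ext_d S X p d x1 y) (Finite T) /\ x = act y s.

Variable C : list S.
Hypothesis HC : forall s : S,
      Rbar_le (ext_d S X p d (act x1 s) (act x1 (inv s ⊗ s))) (Finite (2 * T + 1)) ->
      exists c e, In c C /\ idem S e /\ s = c ⊗ e.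

Definition M := C ++ map inv C.

Lemma M_sym g : In g M -> In (inv g) M.
Proof.
  unfold M. intros H. apply in_or_app. destruct (in_app_or _ _ _ H) as [H1|H1].
  - right. apply in_map. exact H1.
  - left. apply in_map_iff in H1. destruct H1 as [c [<- Hc]]. rewrite inv_inv. exact Hc.
Qed.

Definition K := fold_right Rmax 0 (map (fun g => d (act x1 g) (act x1 (inv g ⊗ g))) M).

Lemma K_ge0 : 0 <= K.
Proof. unfold K. induction (map _ M) as [|a l IH]; simpl; [lra|]. eapply Rle_trans; [exact IH|apply Rmax_r]. Qed.

Lemma K_bound g : In g M -> d (act x1 g) (act x1 (inv g ⊗ g)) <= K.
Proof.
  unfold K. intros H. induction M as [|a l IH]; [destruct H|].
  simpl. destruct H as [<-|H]; [apply Rmax_l|]. eapply Rle_trans; [apply IH; exact H|apply Rmax_r].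
Qed.

Lemma Lrel_p s t : Lrel S s t -> p (act x1 s) = p (act x1 t).
Proof. unfold Lrel. rewrite !p1. auto. Qed.

Lemma step_edge u v : Lrel S u v -> d (act x1 u) (act x1 v) <= 2 * T + 1 ->
  exists c, In c M /\ c ⊗ u = v.
Proof.
  intros Hl Hd.
  set (g := v ⊗ inv u).
  destruct (HC g) as [c [e [Hc [He Hg]]]].
  { rewrite ext_d_eq by (rewrite p1, p1_idem; reflexivity).
    simpl. unfold g at 2 3. rewrite (alg_A3 S u v Hl). unfold g.
    rewrite <- !Hact. eapply Rle_trans; [apply Hdnon; symmetry; apply Lrel_p; exact Hl|].
    rewrite Hsym by (symmetry; apply Lrel_p; exact Hl). exact Hd. }
  exists c. split; [unfold M; apply in_or_app; left; exact Hc|].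
  symmetry. apply (alg_A1 S u v c e Hl He).
  rewrite <- Hg. unfold g. symmetry. apply alg_A2. exact Hl.
Qed.

Lemma edge_bound g u v : In g M -> Lrel S u v -> g ⊗ u = v -> d (act x1 u) (act x1 v) <= K.
Proof.
  intros HM Hl Hg.
  assert (E1 : act x1 u = act (act x1 (inv g ⊗ g)) u) by (rewrite Hact, (alg_A4 S g u v Hl Hg); reflexivity).
  assert (E2 : act x1 v = act (act x1 g) u) by (rewrite Hact, Hg; reflexivity).
  rewrite E1, E2. eapply Rle_trans; [apply Hdnon; rewrite p1_idem, p1; reflexivity|].
  rewrite Hsym by (rewrite p1_idem, p1; reflexivity). apply K_bound; exact HM.
Qed.

Lemma cedge_bound v w : Lrel S v w -> cayley_edge S M v w -> d (act x1 v) (act x1 w) <= K.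
Proof.
  intros Hl [g [HM [H|H]]].
  - eapply edge_bound; eauto.
  - rewrite Hsym by (apply Lrel_p; exact Hl). eapply edge_bound; eauto. unfold Lrel in *. auto.
Qed.

Lemma walk_bound n u w : cwalk S M n u w -> Lrel S u w /\ d (act x1 u) (act x1 w) <= K * INR n.
Proof.
  induction 1 as [u|n u v w Hw IH Hl He].
  - split; [reflexivity|]. simpl. rewrite Rmult_0_r. right. apply Hdxx; reflexivity.
  - destruct IH as [IH1 IH2]. split; [unfold Lrel in *; congruence|].
    pose proof (cedge_bound v w Hl He).
    eapply Rle_trans; [apply Htri; apply Lrel_p; eauto|]. rewrite S_INR. lra.
Qed.

Definition rep u z := p (act x1 u) = p z /\ d (act x1 u) z <= T.

Lemma rep_exists z : exists u, rep u z.
Proof.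
  destruct (Hcob z) as [y [s [H1 H2]]]. apply ext_d_le in H1. destruct H1 as [Hp Hd].
  exists s. subst z. split.
  - rewrite !Hpact, <- Hp. reflexivity.
  - eapply Rle_trans; [apply Hdnon; exact Hp|exact Hd].
Qed.

Lemma rep_self s : rep s (act x1 s).
Proof. split; [reflexivity|]. apply Rle_trans with 0; [right; apply Hdxx; reflexivity|exact HT]. Qed.

Lemma near u u' z z' : rep u z -> rep u' z' -> p z = p z' -> d z z' <= 1 ->
  Lrel S u u' /\ cayley_edge S M u u'.
Proof.
  intros [Hp1 Hd1] [Hp2 Hd2] Hp Hd.
  assert (Hl : Lrel S u u') by (unfold Lrel; rewrite <- !p1; congruence).
  split; [exact Hl|].
  destruct (step_edge u u' Hl) as [c [Hc Hcu]].
  { eapply Rle_trans. apply (Htri _ z); congruence.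
    eapply Rle_trans. apply Rplus_le_compat_l. apply (Htri _ z'); congruence.
    rewrite (Hsym z' (act x1 u')) by congruence. lra. }
  exists c. split; auto.
Qed.

Lemma div_le a b N : 0 < N -> a <= b * N -> a / N <= b.
Proof.
  intros HN H. apply Rmult_le_reg_r with N; auto.
  replace (a / N * N) with a by (field; lra). exact H.
Qed.

Lemma nat_above D : 0 <= D -> exists n : nat, D < INR n /\ INR n <= D + 1.
Proof.
  intros HD. destruct (archimed D) as [H1 H2].
  assert (Hz : (0 <= up D)%Z) by (apply le_IZR; lra).
  exists (Z.to_nat (up D)). rewrite INR_IZR_INZ, Z2Nat.id by exact Hz. lra.
Qed.

Hypothesis Hgeo : geodesic S X p d.

Lemma connect s t : Lrel S s t ->
  exists n, cwalk S M n s t /\ INR n <= d (act x1 s) (act x1 t) + 2.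
Proof.
  intros Hl.
  set (D := d (act x1 s) (act x1 t)).
  assert (HD0 : 0 <= D) by (apply Hd0, Lrel_p, Hl).
  destruct (Hgeo (act x1 s) (act x1 t) D) as [gamma [G0 [GD Gd]]].
  { apply ext_d_eq. apply Lrel_p, Hl. }
  destruct (nat_above D HD0) as [n [Hn1 Hn2]].
  assert (HN : 0 < INR n) by lra.
  set (z := fun k => gamma (INR k * D / INR n)).
  assert (Hrange : forall k, (k <= n)%nat -> 0 <= INR k * D / INR n <= D).
  { intros k Hk. apply le_INR in Hk. split.
    - unfold Rdiv. apply Rmult_le_pos; [apply Rmult_le_pos; auto using pos_INR|].
      left. apply Rinv_0_lt_compat; exact HN.
    - apply div_le; auto. apply Rmult_le_compat_r with (r := D) in Hk; auto. lra. }
  assert (Hstep : forall k, (k <= n)%nat -> exists u, rep u (z k) /\ cwalk S M k s u).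
  { induction k as [|k IH]; intros Hk.
    - exists s. split; [|constructor]. unfold z. simpl.
      replace (0 * D / INR n) with 0 by (field; lra). rewrite G0. apply rep_self.
    - destruct IH as [u [Hu Hw]]; [lia|].
      destruct (rep_exists (z (Datatypes.S k))) as [u' Hu'].
      exists u'. split; [exact Hu'|].
      assert (Hzz : p (z k) = p (z (Datatypes.S k)) /\ d (z k) (z (Datatypes.S k)) <= 1).
      { unfold z. destruct (ext_d_fin _ _ _ (Gd _ _ (Hrange k ltac:(lia)) (Hrange (Datatypes.S k) Hk))) as [Hp Hdd].
        split; [exact Hp|]. rewrite Hdd.
        replace (INR k * D / INR n - INR (Datatypes.S k) * D / INR n) with (- (D / INR n)) by (rewrite S_INR; field; lra).
        rewrite Rabs_Ropp, Rabs_right.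
        + apply div_le; lra.
        + apply Rle_ge. unfold Rdiv. apply Rmult_le_pos; auto. left. apply Rinv_0_lt_compat; exact HN. }
      destruct Hzz as [Hp Hdd].
      destruct (near u u' (z k) (z (Datatypes.S k)) Hu Hu' Hp Hdd) as [Hl' He].
      econstructor; eauto. }
  destruct (Hstep n (le_n n)) as [u [Hu Hw]].
  assert (Hzn : z n = act x1 t) by (unfold z; replace (INR n * D / INR n) with D by (field; lra); exact GD).
  rewrite Hzn in Hu.
  destruct (near u t (act x1 t) (act x1 t) Hu (rep_self t) eq_refl) as [Hl' He].
  { apply Rle_trans with 0; [right; apply Hdxx; reflexivity|lra]. }
  exists (Datatypes.S n). split; [econstructor; eauto|]. rewrite S_INR. fold D. lra.
Qed.


Lemma CD_walk s t u : cayley_dist S M s t = Finite u -> exists n, cwalk S M n s t.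
Proof.
  intros H. destruct (Classical_Prop.classic (exists n, cwalk S M n s t)) as [Hx|Hn]; [exact Hx|].
  exfalso. destruct (Glb_Rbar_correct (fun r => exists n, cwalk S M n s t /\ r = INR n)) as [_ Hg].
  specialize (Hg p_infty). unfold cayley_dist in H. rewrite H in Hg. simpl in Hg.
  apply Hg. intros r [n [Hw _]]. exfalso. apply Hn. exists n. exact Hw.
Qed.

Lemma CD_le s t n : cwalk S M n s t -> Rbar_le (cayley_dist S M s t) (Finite (INR n)).
Proof.
  intros Hw. destruct (Glb_Rbar_correct (fun r => exists n, cwalk S M n s t /\ r = INR n)) as [Hl _].
  apply Hl. exists n. auto.
Qed.

Lemma CD_lb s t b : (forall n, cwalk S M n s t -> b <= INR n) -> Rbar_le (Finite b) (cayley_dist S M s t).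
Proof.
  intros Hb. destruct (Glb_Rbar_correct (fun r => exists n, cwalk S M n s t /\ r = INR n)) as [_ Hg].
  apply Hg. intros r [n [Hw ->]]. simpl. apply Hb; exact Hw.
Qed.

Lemma CD_fin s t n : cwalk S M n s t -> exists u, cayley_dist S M s t = Finite u.
Proof.
  intros Hw. pose proof (CD_le s t n Hw) as H1.
  pose proof (CD_lb s t 0 (fun n _ => pos_INR n)) as H2.
  destruct (cayley_dist S M s t) as [r| |]; simpl in *; try contradiction. eauto.
Qed.

Lemma is_finite_ex (x : Rbar) : is_finite x <-> exists r, x = Finite r.
Proof.
  split.
  - intros H. exists (real x). symmetry. exact H.
  - intros [r ->]. reflexivity.
Qed.

Definition gen (x : S) := exists (a : S) (l : list S),
      (forall g, In g (a :: l) -> In g M \/ idem S g) /\ x = fold_left (@im_mul S) l a.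

Lemma gen_walk n u w : cwalk S M n u w -> gen u -> gen w.
Proof.
  induction 1 as [u|n u v w Hw IH Hl He]; intros Hu; [exact Hu|].
  destruct (IH Hu) as [a [l [Hal Hv]]].
  destruct He as [g [HM [Hg|Hg]]].
  - exists g, (a :: l). split.
    + intros h [<-|Hh]; [left; exact HM|]. apply Hal; exact Hh.
    + simpl. rewrite fold_mul. rewrite <- Hv. symmetry; exact Hg.
  - exists (inv g), (a :: l). split.
    + intros h [<-|Hh]; [left; apply M_sym; exact HM|]. apply Hal; exact Hh.
    + simpl. rewrite fold_mul. rewrite <- Hv. symmetry. apply alg_A6; auto.
Qed.

Lemma main_inner : quasi_generating S M /\
      (forall s t, npo S s t -> xle S X p act (act x1 s) (act x1 t)) /\
      quasi_isometry (cayley_dist S M) (ext_d S X p d) (fun s => act x1 s).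
Proof.
  split; [split|split].
  - exact M_sym.
  - intros s.
    assert (Hl : Lrel S (inv s ⊗ s) s).
    { unfold Lrel. rewrite idem_inv by apply idem_linv. apply idem_linv. }
    destruct (connect _ _ Hl) as [n [Hw _]].
    apply (gen_walk n (inv s ⊗ s) s Hw).
    exists (inv s ⊗ s), nil. split; [|reflexivity].
    intros g [<-|[]]. right. apply idem_linv.
  - intros s t [e [He ->]]. unfold xle. rewrite Hact, Hpact, Hx1.
    rewrite <- alg_A7 by exact He. reflexivity.
  - exists (K + 1), (T + 2). pose proof K_ge0 as HK.
    split; [lra|]. split; [lra|]. split; [|split].
    + intros a a'. rewrite !is_finite_ex. split.
      * intros [u Hu]. destruct (CD_walk _ _ _ Hu) as [n Hw].
        destruct (walk_bound _ _ _ Hw) as [Hl _]. exists (d (act x1 a) (act x1 a')).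
        apply ext_d_eq, Lrel_p, Hl.
      * intros [v Hv]. apply ext_d_fin in Hv. destruct Hv as [Hp _].
        assert (Hl : Lrel S a a') by (unfold Lrel; rewrite <- !p1; exact Hp).
        destruct (connect _ _ Hl) as [n [Hw _]]. eapply CD_fin; eauto.
    + intros a a' u v Hu Hv. apply ext_d_fin in Hv. destruct Hv as [Hp Hdv].
      assert (Hl : Lrel S a a') by (unfold Lrel; rewrite <- !p1; exact Hp).
      destruct (connect _ _ Hl) as [n [Hw Hn]].
      pose proof (CD_le _ _ _ Hw) as H1. rewrite Hu in H1. simpl in H1.
      pose proof (CD_lb a a' 0 (fun n _ => pos_INR n)) as H2. rewrite Hu in H2. simpl in H2.
      split.
      * assert (u / (K + 1) <= u) by (apply div_le; nra). lra.
      * assert (H3 : Rbar_le (Finite (v / (K + 1))) (cayley_dist S M a a')).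
        { apply CD_lb. intros m Hm. destruct (walk_bound _ _ _ Hm) as [_ Hb].
          apply div_le; [lra|]. rewrite Hdv in Hb. pose proof (pos_INR m). nra. }
        rewrite Hu in H3. simpl in H3.
        assert (v <= (K + 1) * u).
        { apply Rmult_le_compat_l with (r := K + 1) in H3; [|lra].
          replace ((K + 1) * (v / (K + 1))) with v in H3 by (field; lra). exact H3. }
        lra.
    + intros b. destruct (rep_exists b) as [u [Hp Hd]]. exists u.
      rewrite ext_d_eq by (symmetry; exact Hp). simpl. rewrite Hsym by (symmetry; exact Hp). lra.
Qed.

End Geo.

Theorem theorem2p4 (S : InverseMonoid) (X : Type) (p : X -> S)
  (act : X -> S -> X) (d : X -> X -> R) :
  presheaf_metric S X p act d ->
  geodesic S X p d ->
  acts S X p act d ->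
  proper_action S X p act d ->
  cobounded_action S X p act d ->
  exists M : list S, quasi_generating S M /\
    exists x1 : X, p x1 = im_one /\
      (forall s t, npo S s t -> xle S X p act (act x1 s) (act x1 t)) /\
      quasi_isometry (cayley_dist S M) (ext_d S X p d) (fun s => act x1 s).
Proof.
  intros Hpre Hgeo Hacts Hprop Hcob.
  destruct Hpre as (_ & _ & _ & _ & _ & Hd0 & Hdxx & Hsym & Htri & _).
  destruct Hacts as (Hact & Hpact & Hdnon).
  destruct Hcob as (x1 & T & Hx1 & HT & Hcob).
  destruct (Hprop x1 (2 * T + 1) Hx1) as [C HC]; [lra|].
  destruct (main_inner S X p act d Hact Hpact Hdnon Hd0 Hdxx Hsym Htri x1 Hx1 T HT Hcob C HC Hgeo)
    as (Hq & Ho & Hqi).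
  exists (M S C). split; [exact Hq|]. exists x1. auto.
Qed.
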